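(* Let $p$ be a prime, let $\alpha,\beta\ge1$ be integers, and let $B$ be a commutative group of exponent $p^\beta$. Then $$\delta(\mathbb{Z}/p^\alpha\mathbb{Z},B)=(\beta(p-1)+1)p^{\alpha-1}-1.$$ Equivalently, the nilpotency index of the augmentation ideal of $(\mathbb{Z}/p^\beta\mathbb{Z})[\mathbb{Z}/p^\alpha\mathbb{Z}]$ is $(\beta(p-1)+1)p^{\alpha-1}$.
   Context: For commutative groups $A,B$, $B^A$ denotes the commutative group (under pointwise addition) of all maps $A\to B$. For $a\in A$, the difference operator $\Delta_a:B^A\to B^A$ is $(\Delta_a f)(x)=f(x+a)-f(x)$. Let $\widetilde{\mathbb N}=\mathbb N\cup\{-\infty,\infty\}$ ($\mathbb N=\{0,1,2,\dots\}$), totally ordered with $-\infty$ least and $\infty$ greatest. The functional degree $\operatorname{fdeg}(f)\in\widetilde{\mathbb N}$ of $f\in B^A$ is: $-\infty$ if $f=0$; otherwise the least $n\in\mathbb N$ such that $\Delta_{a_1}\cdots\Delta_{a_{n+1}}f=0$ for all $a_1,\dots,a_{n+1}\in A$; and $\infty$ if no such $n$ exists. Define $\delta(A,B)=\sup\{\operatorname{fdeg}(f): f\in B^A\}$. For a commutative ring $R$ and group $A$, the augmentation ideal of the group ring $R[A]$ is the kernel of $\sum r_a[a]\mapsto\sum r_a$; the nilpotency index of an ideal $I$ is the least $n\in\mathbb N$ with $I^n=0$, or $\infty$ if none exists. *)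

(* Defs.v *)
From HB Require Import structures.
From mathcomp Require Import all_boot all_order all_algebra.
Set Implicit Arguments. Unset Strict Implicit. Unset Printing Implicit Defensive.
Import GRing.Theory.
Local Open Scope ring_scope.

Inductive natinf := NegInf | Fin of nat | PosInf.

Definition natinf_le (x y : natinf) : Prop :=
  match x, y with
  | NegInf, _ => True
  | _, PosInf => True
  | Fin m, Fin n => (m <= n)%N
  | _, _ => False
  end.

Definition Delta (A B : zmodType) (a : A) (f : A -> B) : A -> B :=
  fun x => f (x + a) - f x.

Definition iterDelta (A B : zmodType) (s : seq A) (f : A -> B) : A -> B :=
  foldr (@Delta A B) f s.

Definition vanishes_at (A B : zmodType) (f : A -> B) (n : nat) : Prop :=
  forall s : seq A, size s = n.+1 -> forall x, iterDelta s f x = 0.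

Definition fdeg_is (A B : zmodType) (f : A -> B) (d : natinf) : Prop :=
  match d with
  | NegInf => forall x, f x = 0
  | Fin n => (exists x, f x <> 0) /\ vanishes_at f n /\
             (forall m, vanishes_at f m -> (n <= m)%N)
  | PosInf => (exists x, f x <> 0) /\ (forall n, ~ vanishes_at f n)
  end.

Definition delta_is (A B : zmodType) (d : natinf) : Prop :=
  (forall (f : A -> B) e, fdeg_is f e -> natinf_le e d) /\
  (forall u, (forall (f : A -> B) e, fdeg_is f e -> natinf_le e u) -> natinf_le d u).

Definition has_exponent (B : zmodType) (n : nat) : Prop :=
  (0 < n)%N /\ (forall b : B, b *+ n = 0) /\
  (forall m, (0 < m)%N -> (forall b : B, b *+ m = 0) -> (n <= m)%N).

(* Main.v *)
Require Import Defs.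
From mathcomp Require Import all_boot all_order all_algebra.
From mathcomp Require Import zify ring.
From Stdlib Require Import FunctionalExtensionality Classical.

Module HA.
Set Implicit Arguments. Unset Strict Implicit. Unset Printing Implicit Defensive.
Import GRing.Theory.
Local Open Scope ring_scope.

Lemma iterDelta_sum (A B : zmodType) (s : seq A) m (G : nat -> A -> B) :
  iterDelta s (fun x => \sum_(j < m) G j x) = fun x => \sum_(j < m) iterDelta s (G j) x.
Proof.
elim: s => [//|a s IH] /=; rewrite IH; apply: functional_extensionality => x.
by rewrite /Delta -sumrB.
Qed.

Lemma iterDelta_shift (A B : zmodType) (s : seq A) (c : A) (h : A -> B) :
  iterDelta s (fun x => h (x + c)) = fun x => iterDelta s h (x + c).
Proof.
elim: s => [//|a s IH] /=; rewrite IH; apply: functional_extensionality => x.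
by rewrite /Delta addrAC.
Qed.

Lemma Delta_tele (A B : zmodType) (u : A) m (f : A -> B) :
  Delta (u *+ m) f = fun x => \sum_(j < m) Delta u f (x + u *+ j).
Proof.
apply: functional_extensionality => x; elim: m => [|m IH].
  by rewrite big_ord0 /Delta mulr0n addr0 subrr.
rewrite big_ord_recr /= -IH /Delta mulrSr addrA.
by rewrite [RHS]addrC addrA subrK.
Qed.

Lemma red_lemma (A B : zmodType) (u : A) (hu : forall a : A, exists m, a = u *+ m)
  (s : seq A) (f : A -> B) :
  (forall y, iter (size s) (Delta u) f y = 0) -> forall x, iterDelta s f x = 0.
Proof.
elim/last_ind: s f => [|s a IH] f H x; first exact: H.
have [m ->] := hu a.
rewrite /iterDelta foldr_rcons -/(iterDelta s _) Delta_tele (iterDelta_sum s m (fun j x => Delta u f (x + u *+ j))).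
apply: big1 => j _; rewrite (iterDelta_shift s (u *+ j) (Delta u f)) IH //.
by move=> y; have := H y; rewrite size_rcons iterSr.
Qed.

Lemma newton (A B : zmodType) (u : A) n (f : A -> B) y :
  f (y + u *+ n) = \sum_(k < n.+1) iter k (Delta u) f y *+ 'C(n, k).
Proof.
elim: n f => [|n IH] f.
  by rewrite big_ord_recl big_ord0 mulr0n addr0 addr0 /= mulr1n.
have -> : f (y + u *+ n.+1) = f (y + u *+ n) + Delta u f (y + u *+ n).
  by rewrite /Delta mulrSr addrA [RHS]addrC subrK.
rewrite (IH f) (IH (Delta u f)).
rewrite [in RHS]big_ord_recl /= bin0 mulr1n.
rewrite [in RHS](eq_bigr (fun i : 'I_n.+1 => iter i (Delta u) (Delta u f) y *+ 'C(n, i.+1) + iter i (Delta u) (Delta u f) y *+ 'C(n, i))); last first.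
  by move=> i _; rewrite add0n -iterS iterSr binS mulrnDr.
rewrite big_split /= addrA; congr (_ + _).
rewrite big_ord_recl /= bin0 mulr1n; congr (_ + _).
rewrite [in RHS]big_ord_recr /= bin_small // mulr0n addr0.
by apply: eq_bigr => i _; rewrite -iterSr.
Qed.

End HA.
Import HA.

Module HB.
Set Implicit Arguments. Unset Strict Implicit. Unset Printing Implicit Defensive.
Import GRing.Theory.
Local Open Scope ring_scope.

Definition mb (q k : nat) : int := if k is 0 then 0 else ('C(q,k))%:Z.
Fixpoint st (q n : nat) : nat -> int :=
  match n with
  | 0 => fun k => (k == 0)%:Z
  | n'.+1 => fun k => (if k is k'.+1 then st q n' k' else 0) - st q n' q.-1 * mb q k
  end.

Lemma key_id (A B : zmodType) (u : A) Q (hq : u *+ Q.+1 = 0) (f : A -> B) y :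
  iter Q.+1 (Delta u) f y = - \sum_(k < Q) iter k.+1 (Delta u) f y *+ 'C(Q.+1, k.+1).
Proof.
have := newton u Q.+1 f y; rewrite hq addr0 big_ord_recl /= bin0 mulr1n.
rewrite big_ord_recr /= binn mulr1n => H.
apply/eqP; rewrite -subr_eq0 opprK; apply/eqP.
apply: (addrI (f y)); rewrite addr0 [_ + \sum_(_ < _) _]addrC addrA.
rewrite [RHS]H [in RHS]addrA; congr (_ + _ + _); apply: eq_bigr => i _; by rewrite add0n /bump leq0n add1n.
Qed.

Lemma rep (A B : zmodType) (u : A) Q (hq : u *+ Q.+1 = 0) n (f : A -> B) y :
  iter n (Delta u) f y = \sum_(k < Q.+1) iter k (Delta u) f y *~ st Q.+1 n k.
Proof.
elim: n f => [|n IH] f.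
  rewrite big_ord_recl /= mulr1z big1 ?addr0 // => i _.
rewrite iterSr IH big_ord_recr /=.
rewrite [in RHS]big_ord_recl /= mulr0 subrr mulr0z add0r.
rewrite -(iterSr Q (Delta u) f) (key_id hq f y) mulNrz mulrz_suml.
under [in RHS]eq_bigr => i _ do rewrite mulrzBr.
rewrite sumrB; congr (_ - _).
  by apply: eq_bigr => i _; rewrite add0n -iterS iterSr.
apply: eq_bigr => i _; rewrite pmulrn mulrzA_C add0n -iterS /bump leq0n add1n.
done.
Qed.


End HB.
Import HB.

Module HC.
Set Implicit Arguments. Unset Strict Implicit. Unset Printing Implicit Defensive.

Lemma bin_dvd p a k : prime p -> (0 < k <= p ^ a)%N ->
  (p ^ (a - logn p k) %| 'C(p ^ a, k))%N.
Proof.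
move=> pp /andP[k0 ka].
have hq : (p ^ a * 'C((p ^ a).-1, k.-1) = k * 'C(p ^ a, k))%N.
  by rewrite mul_bin_diag prednK.
have hk : k = (p ^ logn p k * k`_p^')%N by rewrite -p_part partnC.
have cop : coprime p k`_p^'.
  by have := coprime_partC p p k; rewrite part_pnat_id // pnat_id.
have vle : (logn p k <= a)%N.
  rewrite -(leq_exp2l _ _ (prime_gt1 pp)) -p_part.
  exact: leq_trans (dvdn_leq k0 (dvdn_part _ _)) ka.
have : (p ^ a %| k * 'C(p ^ a, k))%N by rewrite -hq dvdn_mulr.
rewrite {1}hk -mulnA -{1}(subnKC vle) expnD dvdn_pmul2l ?expn_gt0 ?prime_gt0 //.
by rewrite Gauss_dvdr // coprimeXl.
Qed.

Lemma logn_lt p k j : prime p -> (0 < k < p ^ j)%N -> (logn p k < j)%N.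
Proof.
move=> pp /andP[k0 kj].
rewrite -(ltn_exp2l _ _ (prime_gt1 pp)) -p_part.
exact: leq_ltn_trans (dvdn_leq k0 (dvdn_part _ _)) kj.
Qed.

Lemma F1 p a k : prime p -> (0 < k < p ^ a)%N -> (p %| 'C(p ^ a, k))%N.
Proof.
move=> pp hk; have := logn_lt pp hk => lt.
case/andP: hk => k0 /ltnW ka.
have := @bin_dvd p a k pp; rewrite k0 ka => /(_ isT); apply: dvdn_trans.
by rewrite -{1}(expn1 p) dvdn_exp2l // subn_gt0.
Qed.

Lemma F2 p a k : prime p -> (0 < k < p ^ a.-1)%N -> (p ^ 2 %| 'C(p ^ a, k))%N.
Proof.
move=> pp hk; have := logn_lt pp hk => lt.
case/andP: hk => k0 ka.
have ka' : (k <= p ^ a)%N.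
  apply: leq_trans (ltnW ka) _; rewrite leq_exp2l ?prime_gt1 //; lia.
have := @bin_dvd p a k pp; rewrite k0 ka' => /(_ isT); apply: dvdn_trans.
rewrite dvdn_exp2l //; lia.
Qed.

Lemma binm1_ndvd p a j : prime p -> (j < p ^ a)%N -> ~~ (p %| 'C((p ^ a).-1, j))%N.
Proof.
move=> pp; elim: j => [|j IH] hj.
  by rewrite bin0 dvdn1; apply/eqP => p1; rewrite p1 in pp.
have hq : (0 < p ^ a)%N by rewrite expn_gt0 prime_gt0.
have := @F1 p a j.+1 pp; rewrite hj /= => /(_ isT).
rewrite -{1}(prednK hq) binS; apply: contraL => H.
by rewrite dvdn_addr // (negbTE (IH (ltnW hj))).
Qed.

Lemma F3 p a : prime p -> (0 < a)%N ->
  'C(p ^ a, p ^ a.-1) = (p * 'C((p ^ a).-1, (p ^ a.-1).-1))%N /\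
  ~~ (p %| 'C((p ^ a).-1, (p ^ a.-1).-1))%N.
Proof.
move=> pp a0; have p0 := prime_gt0 pp.
have q0 : (0 < p ^ a.-1)%N by rewrite expn_gt0 p0.
have hqa : (p ^ a = p * p ^ a.-1)%N by rewrite -expnS prednK.
split; last first.
  apply: binm1_ndvd => //; rewrite hqa; have := prime_gt1 pp; nia.
have := mul_bin_diag (p ^ a) (p ^ a.-1).-1; rewrite prednK // {1}hqa.
move=> /eqP; rewrite [(p * _)%N]mulnC -mulnA eqn_pmul2l // => /eqP ->.
by [].
Qed.

End HC.
Import HC.

Module HD.
Set Implicit Arguments. Unset Strict Implicit. Unset Printing Implicit Defensive.
Import GRing.Theory.
Local Open Scope ring_scope.

Definition Hyp (p q q' phi : nat) :=
  [/\ (0 < q')%N, (q' <= phi)%N, q = (phi + q')%N,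
      (forall k, (0 < k < q)%N -> (p %| 'C(q, k))%N) &
      (forall k, (0 < k < q')%N -> (p ^ 2 %| 'C(q, k))%N)].

Lemma dvdz_natE (m n : nat) : (m%:Z %| n%:Z)%Z = (m %| n)%N.
Proof. by rewrite dvdzE. Qed.

Lemma mbdiv1 p q q' phi k : Hyp p q q' phi -> (k < q)%N -> (p%:Z %| mb q k)%Z.
Proof.
case=> _ _ _ H1 _; case: k => [|k] hk /=; first exact: dvdz0.
by rewrite dvdz_natE H1.
Qed.

Lemma mbdiv2 p q q' phi k : Hyp p q q' phi -> (k < q')%N -> (p%:Z ^+ 2 %| mb q k)%Z.
Proof.
case=> _ _ _ _ H2; case: k => [|k] hk /=; first exact: dvdz0.
have -> : (p%:Z ^+ 2 = (p ^ 2)%N%:Z) by rewrite -!natz natrX.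
by rewrite dvdz_natE H2.
Qed.

Lemma st_small q n k : (n < q)%N -> st q n k = (k == n)%:Z.
Proof.
elim: n k => [//|n IH] k hn /=.
rewrite IH ?(ltnW hn) //.
have -> : (q.-1 == n) = false by apply/negbTE; lia.
rewrite mul0r subr0; case: k => [//|k] /=.
by rewrite IH ?(ltnW hn).
Qed.

Lemma dvd_comb (P : int) a b x y : (P ^+ (a - b) %| x)%Z -> (P ^+ b %| y)%Z ->
  (P ^+ a %| x * y)%Z.
Proof.
move=> hx hy; apply: dvdz_trans (dvdz_mul hx hy); rewrite -exprD.
apply: dvdz_exp2l; lia.
Qed.

Lemma other_step p q q' phi n k a : Hyp p q q' phi -> (k < q)%N ->
  ((0 < k)%N -> (p%:Z ^+ a %| st q n k.-1)%Z) ->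
  ((q' <= k)%N -> (p%:Z ^+ (a - 1) %| st q n q.-1)%Z) ->
  ((0 < k < q')%N -> (p%:Z ^+ (a - 2) %| st q n q.-1)%Z) ->
  (p%:Z ^+ a %| st q n.+1 k)%Z.
Proof.
move=> hh hk h1 h2 h3 /=; case: k hk h1 h2 h3 => [|k] hk h1 h2 h3.
  by rewrite /= mulr0 subr0 dvdz0.
apply: rpredB; first exact: h1.
case: (ltnP k.+1 q') => hkq.
  by apply: dvd_comb (h3 _) (mbdiv2 hh hkq); rewrite hkq.
by apply: dvd_comb (h2 hkq) _; rewrite expr1; exact: mbdiv1 hh hk.
Qed.

Definition Lp (p q q' phi e r : nat) :=
  let n := (e * phi + r)%N in
  (p%:Z ^+ e.+1 %| st q n r - (- ('C(q, q'))%:Z) ^+ e)%Z /\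
  forall k a, (k < q)%N -> k != r -> (a * phi + k <= n + phi)%N ->
    (p%:Z ^+ a %| st q n k)%Z.

Lemma Lbase p q q' phi : Hyp p q q' phi -> Lp p q q' phi 0 q'.
Proof.
case=> q0 qp qe _ _; rewrite /Lp mul0n add0n st_small ?eqxx ?expr0 ?subrr; last lia.
split; first exact: dvdz0.
by move=> k a _ hk _; rewrite st_small ?(negbTE hk) ?dvdz0 //; lia.
Qed.

Ltac sl := try (apply/eqP => ?); nia.

Lemma Lstep1 p q q' phi e r : Hyp p q q' phi -> (q' <= r)%N -> (r.+1 < q)%N ->
  Lp p q q' phi e r -> Lp p q q' phi e r.+1.
Proof.
move=> hh hr hrq [L1 L2]; have [q0 qp qe _ _] := hh.
rewrite /Lp addnS.
split.
  rewrite /= [X in (_ %| X)%Z](_ : _ = (st q (e * phi + r) r - (- ('C(q, q'))%:Z) ^+ e)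
     - st q (e * phi + r) q.-1 * mb q r.+1); last by rewrite /=; ring.
  apply: rpredB => //; apply: (@dvd_comb _ _ 1); first rewrite subn1 /=.
    apply: L2; sl.
  by rewrite expr1; apply: mbdiv1 hh hrq.
move=> k a hk hkr hb; apply: other_step hh (hk) _ _ _.
- move=> k0; apply: L2; sl.
- move=> hk'; apply: L2; rewrite ?mulnBl; sl.
- move=> hk'; apply: L2; rewrite ?mulnBl; sl.
Qed.

Lemma Lstep2 p q q' phi e : Hyp p q q' phi ->
  Lp p q q' phi e q.-1 -> Lp p q q' phi e.+1 q'.
Proof.
move=> hh [L1 L2]; have [q0 qp qe H1 _] := hh.
have hn : (e.+1 * phi + q' = (e * phi + q.-1).+1)%N by rewrite mulSn; nia.
have Cdiv : (p%:Z %| ('C(q,q'))%:Z)%Z by rewrite dvdz_natE H1 //; apply/andP; split; lia.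
have hs : (p%:Z ^+ e %| st q (e * phi + q.-1) q.-1)%Z.
  have -> : st q (e * phi + q.-1) q.-1 = (st q (e * phi + q.-1) q.-1 - (- ('C(q, q'))%:Z) ^+ e) + (- ('C(q, q'))%:Z) ^+ e by rewrite subrK.
  apply: rpredD.
    exact: dvdz_trans (dvdz_exp2l _ (leqnSn e)) L1.
  by apply: dvdz_exp2r; rewrite rpredN.
rewrite /Lp hn.
have E : st q (e * phi + q.-1).+1 q' = st q (e * phi + q.-1) q'.-1
   - st q (e * phi + q.-1) q.-1 * ('C(q,q'))%:Z.
  by rewrite -[in LHS](prednK q0) /= prednK.
split.
  rewrite E.
  set s1 := st q (e * phi + q.-1) q'.-1; set s2 := st q (e * phi + q.-1) q.-1.
  set C := ('C(q,q'))%:Z.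
  have -> : s1 - s2 * C - (- C) ^+ e.+1 = s1 - (s2 - (- C) ^+ e) * C.
    by rewrite exprSr; ring.
  apply: rpredB.
    apply: L2; clear -q0 qp qe; [lia | apply/eqP => ?; lia | rewrite !mulSn; lia].
  apply: (@dvd_comb _ _ 1); first by rewrite subn1 /=.
  by rewrite expr1.
move=> k a hk hkq hb; apply: other_step hh (hk) _ _ _.
- move=> k0; apply: L2; clear -q0 qp qe hk hkq hb k0; [lia | apply/eqP => ?; lia | lia].
- move=> hk'; have hk2 : (q' < k)%N by rewrite ltn_neqAle eq_sym hkq hk'.
  apply: dvdz_trans (dvdz_exp2l _ _) hs; clear -q0 qp qe hk hb hk2; nia.
- move=> hk'; apply: dvdz_trans (dvdz_exp2l _ _) hs; clear -q0 qp qe hk hb hk'; nia.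
Qed.

Lemma Lall p q q' phi : Hyp p q q' phi -> forall e r, (q' <= r < q)%N -> Lp p q q' phi e r.
Proof.
move=> hh; have [q0 qp qe _ _] := hh.
have Lr : forall e, Lp p q q' phi e q' -> forall d, (q' + d < q)%N -> Lp p q q' phi e (q' + d).
  move=> e L0; elim => [|d IH] hd; first by rewrite addn0.
  rewrite addnS; apply: (Lstep1 hh); [lia | lia | apply: IH; lia].
have L0 : forall e, Lp p q q' phi e q'.
  elim => [|e IH]; first exact: Lbase.
  apply: (Lstep2 hh); have := Lr e IH (q.-1 - q')%N; rewrite subnKC; last lia.
  by apply; lia.
move=> e r /andP[h1 h2]; rewrite -(subnKC h1); apply: Lr => //; lia.
Qed.

End HD.
Import HD.

Module HE.
Set Implicit Arguments. Unset Strict Implicit. Unset Printing Implicit Defensive.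
Import GRing.Theory.
Local Open Scope ring_scope.

Lemma PoszX (n k : nat) : (n ^ k)%N%:Z = n%:Z ^+ k.
Proof. by rewrite -!natz natrX. Qed.

Lemma kill (B : zmodType) (m : nat) (x : B) (z : int) :
  (forall b : B, b *+ m = 0) -> (m%:Z %| z)%Z -> x *~ z = 0.
Proof.
move=> hm /divzK <-; rewrite mulrzA.
by rewrite -pmulrn hm.
Qed.

Lemma coprime_kill (B : zmodType) (p W : nat) (b : B) : prime p -> coprime p W ->
  b *+ p = 0 -> b *+ W = 0 -> b = 0.
Proof.
move=> pp cop hp hW.
have [a _ ha] := Bezoutl W (prime_gt0 pp).
rewrite (eqP cop) in ha.
have : b *+ (1 + a * W) = 0.
  by rewrite -(divnK ha) mulnC mulrnA hp mul0rn.
by rewrite mulrnDr mulr1n mulnC mulrnA hW mul0rn addr0.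
Qed.

Lemma vanish_succ (A B : zmodType) (f : A -> B) m :
  vanishes_at f m -> vanishes_at f m.+1.
Proof.
move=> H [//|a s] /= [hs] x; by rewrite /Delta !H ?subrr.
Qed.

Lemma vanish_mono (A B : zmodType) (f : A -> B) m n :
  vanishes_at f m -> (m <= n)%N -> vanishes_at f n.
Proof.
move=> H; elim: n => [|n IH]; first by rewrite leqn0 => /eqP <-.
rewrite leq_eqVlt => /orP[/eqP <- //|]; rewrite ltnS => /IH.
exact: vanish_succ.
Qed.

Lemma iterDelta_nseq (A B : zmodType) (u : A) n (f : A -> B) :
  iterDelta (nseq n u) f = iter n (Delta u) f.
Proof. by elim: n => //= n ->. Qed.

Lemma Zeq q j i : (1 < q)%N -> (j < q)%N -> (i < q)%N ->
  ((j%:R : 'Z_q) == i%:R) = (j == i).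
Proof.
move=> q1 hj hi; apply/eqP/eqP => [E|->//].
have := congr1 (fun x : 'Z_q => nat_of_ord x) E; rewrite /= !val_Zp_nat // !modn_small //.
Qed.

Lemma setup p alpha : prime p -> (0 < alpha)%N ->
  Hyp p (p ^ alpha) (p ^ (alpha - 1)) ((p - 1) * p ^ (alpha - 1)).
Proof.
move=> pp a0; have p1 := prime_gt1 pp.
have q0 : (0 < p ^ (alpha - 1))%N by rewrite expn_gt0 prime_gt0.
have hq : (p ^ alpha = p * p ^ (alpha - 1))%N by rewrite -expnS subn1 prednK.
split => //.
- by rewrite leq_pmull //; lia.
- by rewrite hq -[X in _ = (_ + X)%N]mul1n -mulnDl subnK //; lia.
- by move=> k hk; apply: F1 pp hk.
- by move=> k hk; apply: F2 pp _; rewrite -subn1.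
Qed.

Lemma st_top p alpha beta : prime p -> (0 < alpha)%N ->
  forall k, (k < p ^ alpha)%N ->
  ((p ^ beta)%N%:Z %| st (p ^ alpha) (beta * ((p - 1) * p ^ (alpha - 1)) + p ^ (alpha - 1)) k)%Z.
Proof.
move=> pp a0 k hk; have hh := setup pp a0; have [q0 qp qe H1 _] := hh.
have Cdiv : (p%:Z %| ('C(p ^ alpha, p ^ (alpha - 1))%N)%:Z)%Z.
  by rewrite dvdz_natE H1 //; apply/andP; split; lia.
have -> : (p ^ beta)%N%:Z = p%:Z ^+ beta by rewrite -!natz natrX.
have hr : (p ^ (alpha - 1) <= p ^ (alpha - 1) < p ^ alpha)%N by apply/andP; split; lia.
have [L1 L2] := Lall hh beta hr.
case: (eqVneq k (p ^ (alpha - 1))%N) => [->|hne].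
  set X := (- ('C(p ^ alpha, p ^ (alpha - 1))%N)%:Z) ^+ beta.
  set S := st _ _ _.
  have -> : S = (S - X) + X by rewrite subrK.
  apply: rpredD; first exact: dvdz_trans (dvdz_exp2l _ (leqnSn beta)) L1.
  by apply: dvdz_exp2r; rewrite rpredN.
apply: L2 => //; lia.
Qed.

Lemma upper p alpha beta (B : zmodType) : prime p -> (0 < alpha)%N ->
  (forall b : B, b *+ (p ^ beta)%N = 0) ->
  forall (f : 'Z_(p ^ alpha) -> B) (s : seq 'Z_(p ^ alpha)),
  size s = (beta * ((p - 1) * p ^ (alpha - 1)) + p ^ (alpha - 1))%N ->
  forall x, iterDelta s f x = 0.
Proof.
move=> pp a0 hB f s hs x.
have q1 : (1 < p ^ alpha)%N.
  by rewrite -[1%N](expn0 p) ltn_exp2l ?prime_gt1.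
have hu : forall a : 'Z_(p ^ alpha), exists m, a = 1 *+ m.
  by move=> a; exists (nat_of_ord a); rewrite natr_Zp.
have u0 : (1 : 'Z_(p ^ alpha)) *+ (p ^ alpha)%N.-1.+1 = 0.
  by rewrite prednK ?pchar_Zp //; lia.
apply: (red_lemma hu) => y; rewrite hs (rep u0) big1 // => k _.
apply: kill hB _; have := ltn_ord k; move: (nat_of_ord k) => j.
rewrite prednK; last lia.
by move=> hj; apply: st_top.
Qed.

Lemma lower p alpha beta (B : zmodType) (b : B) : prime p -> (0 < alpha)%N -> (0 < beta)%N ->
  (forall b : B, b *+ (p ^ beta)%N = 0) -> b *+ (p ^ beta.-1)%N != 0 ->
  iter ((beta.-1) * ((p - 1) * p ^ (alpha - 1)) + (p ^ alpha).-1)%N (Delta (1 : 'Z_(p ^ alpha)))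
     (fun x : 'Z_(p ^ alpha) => if x == ((p ^ alpha).-1)%:R then b else 0) 0 != 0.
Proof.
move=> pp a0 b0 hB hb.
set f0 := (fun x : 'Z_(p ^ alpha) => _).
have q1 : (1 < p ^ alpha)%N.
  by rewrite -[1%N](expn0 p) ltn_exp2l ?prime_gt1.
have Dk : forall j, (j < (p ^ alpha).-1)%N -> iter j (Delta 1) f0 0 = 0.
  elim/ltn_ind => j IH hj.
  have := newton (1 : 'Z_(p ^ alpha)) j f0 0.
  rewrite add0r big_ord_recr /= binn mulr1n big1 ?add0r; last first.
    move=> i _; have hi := ltn_ord i; rewrite IH ?mul0rn //; lia.
  by rewrite /f0 Zeq //; [case: ifP => // /eqP; lia | lia | lia].
have Dtop : iter (p ^ alpha).-1 (Delta 1) f0 0 = b.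
  have := newton (1 : 'Z_(p ^ alpha)) (p ^ alpha).-1 f0 0.
  rewrite add0r big_ord_recr /= binn mulr1n big1 ?add0r; last first.
    by move=> i _; rewrite Dk ?mul0rn.
  by rewrite /f0 eqxx.
have u0 : (1 : 'Z_(p ^ alpha)) *+ (p ^ alpha)%N.-1.+1 = 0.
  by rewrite prednK ?pchar_Zp //; lia.
rewrite (rep u0) big_ord_recr /= big1 ?add0r; last first.
  by move=> i _; rewrite Dk ?mul0rz.
rewrite Dtop prednK; last lia.
have hh := setup pp a0; have [q0 qp qe H1 _] := hh.
have hr : (p ^ (alpha - 1) <= (p ^ alpha).-1 < p ^ alpha)%N by apply/andP; split; lia.
have [L1 _] := Lall hh beta.-1 hr.
rewrite prednK // in L1.
set X := (- ('C(p ^ alpha, p ^ (alpha - 1))%N)%:Z) ^+ beta.-1 in L1.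
set S := st _ _ _ in L1 *.
have -> : S = (S - X) + X by rewrite subrK.
rewrite mulrzDr (@kill _ (p ^ beta)%N) ?add0r //; last first.
  by have -> : (p ^ beta)%N%:Z = p%:Z ^+ beta by rewrite -!natz natrX.
apply/negP => /eqP H.
have [Ceq wnd] := F3 pp a0.
set w := 'C((p ^ alpha).-1, (p ^ alpha.-1).-1) in Ceq wnd.
have hX : X = (-1) ^+ beta.-1 * ((p ^ beta.-1 * w ^ beta.-1)%N)%:Z.
  rewrite /X subn1 Ceq -[- _]mulN1r exprMn; congr (_ * _).
  by rewrite !PoszM exprMn !PoszX.
have H2 : b *~ ((p ^ beta.-1 * w ^ beta.-1)%N)%:Z = 0.
  have := congr1 (fun y => y *~ ((-1) ^+ beta.-1)) H.
  rewrite /= mul0rz -mulrzA hX mulrC mulrA -exprMn mulrNN mulr1 expr1n mul1r.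
  by [].
move: H2; rewrite -pmulrn mulrnA => H2.
have : b *+ (p ^ beta.-1)%N = 0.
  apply: coprime_kill (pp) _ _ H2.
    by apply: coprimeXr; rewrite prime_coprime.
  by rewrite -mulrnA -expnSr prednK.
by move/eqP; rewrite (negbTE hb).
Qed.

End HE.
Import HE.

Unset Implicit Arguments.

Theorem theorem4 (p alpha beta : nat) (B : zmodType) :
  prime p -> (1 <= alpha)%N -> (1 <= beta)%N -> has_exponent B (p ^ beta) ->
  delta_is ('Z_(p ^ alpha) : zmodType) B
    (Fin (((beta * (p - 1) + 1) * p ^ (alpha - 1)) - 1)).
Proof.
move=> pp a1 b1 [e0 [eB emin]].
set N1 := (((beta * (p - 1) + 1) * p ^ (alpha - 1)) - 1)%N.
have hh := setup pp a1; have [q0 qp qe _ _] := hh.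
have p1 := prime_gt1 pp.
have hN : N1.+1 = (beta * ((p - 1) * p ^ (alpha - 1)) + p ^ (alpha - 1))%N.
  rewrite /N1 mulnDl mul1n mulnA subn1 prednK //.
  by rewrite addn_gt0 q0 orbT.
have hN2 : N1 = (beta.-1 * ((p - 1) * p ^ (alpha - 1)) + (p ^ alpha).-1)%N.
  apply: succn_inj; rewrite hN.
  move: qe q0 qp; move: ((p - 1) * p ^ (alpha - 1))%N => phi.
  move: (p ^ (alpha - 1))%N (p ^ alpha)%N => q' q.
  case: (beta) b1 => // b' _; rewrite mulSn /=.
  move: (b' * phi)%N => x; lia.
have N1pos : (0 < N1)%N.
  rewrite -ltnS hN; move: qp q0; move: ((p - 1) * p ^ (alpha - 1))%N => phi.
  move: (p ^ (alpha - 1))%N => q'; case: (beta) b1 => // b' _; rewrite mulSn.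
  move: (b' * phi)%N => x; lia.
have up : forall f : 'Z_(p ^ alpha) -> B, vanishes_at f N1.
  move=> f s hs x; exact: (upper pp a1 eB f (etrans hs hN) x).
have [b hb] : exists b : B, (b *+ (p ^ beta.-1) != 0)%R.
  apply: NNPP => H.
  have : (p ^ beta <= p ^ beta.-1)%N.
    apply: emin; first by rewrite expn_gt0 prime_gt0.
    move=> b; apply/eqP; apply/negPn/negP => nb; apply: H; by exists b.
  by rewrite leqNgt ltn_exp2l // => /negP; apply; lia.
set f0 := (fun x : 'Z_(p ^ alpha) => if x == ((p ^ alpha).-1)%:R%R then b else 0%R).
have nz := lower pp a1 b1 eB hb; rewrite -hN2 in nz.
have fd : fdeg_is f0 (Fin N1).
  split.
    exists ((p ^ alpha).-1)%:R%R; rewrite /f0 eqxx => b0.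
    by move: hb; rewrite b0 GRing.mul0rn eqxx.
  split; first exact: up.
  move=> m hm; rewrite leqNgt; apply/negP => lt.
  have hm' : (m <= N1.-1)%N by lia.
  have E : iterDelta (nseq N1 1%R) f0 0%R = 0%R.
    by apply: (vanish_mono hm hm'); rewrite size_nseq prednK.
  rewrite iterDelta_nseq /f0 in E.
  by rewrite E eqxx in nz.
split.
  move=> f [] //=.
    by move=> n [_ [_ hmin]]; exact: hmin _ (up f).
  by move=> [_ H]; case: (H _ (up f)).
by move=> u H; exact: H _ _ fd.
Qed.
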